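(* For all integers $n,p,m\ge0$, $$\sum_{k=0}^n\binom{k+p}{k}H_{n-k}(m)\,(H_{k+p}-H_p)=\sum_{k=0}^n\binom{k+p}{k}H_{n-k}(m+1).$$ In particular, $\sum_{k=0}^n\binom{k+p}{k}(H_{k+p}-H_p)=\sum_{k=0}^n\binom{k+p}{k}H_{n-k}$ and $\sum_{k=0}^n\binom{k+p}{k}H_{n-k}(H_{k+p}-H_p)=\sum_{k=0}^n\binom{k+p}{k}\left(H_{n-k}^2-H_{n-k}^{(2)}\right)$.
   Context: For integers $m\ge 1$, $n\ge 0$, the multiple harmonic-like numbers are $H_n(m)=\sum_{1\le k_1+k_2+\cdots+k_m\le n}\frac{1}{k_1k_2\cdots k_m}$ (sum over positive integers $k_1,\dots,k_m$), with $H_n(0)=1$ for $n\ge 0$ and $H_0(m)=0$ for $m\ge1$. Equivalently, $\sum_{n\ge0}H_n(m)z^n=\frac{(-\ln(1-z))^m}{1-z}$. $H_n=\sum_{k=1}^n\frac1k$, $H_n^{(2)}=\sum_{k=1}^n\frac1{k^2}$. *)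

(* Defs.v *)
From mathcomp Require Import all_boot all_order all_algebra.
Set Implicit Arguments. Unset Strict Implicit. Unset Printing Implicit Defensive.
Import Order.TTheory GRing.Theory Num.Theory.
Local Open Scope ring_scope.

Definition harm (n : nat) : rat := \sum_(1 <= i < n.+1) (i%:R)^-1.
Definition harm2 (n : nat) : rat := \sum_(1 <= i < n.+1) (i%:R ^+ 2)^-1.

(* multiple harmonic-like numbers H_n(m):
   sum over positive integers k_1..k_m with 1 <= k_1+...+k_m <= n of
   1/(k_1...k_m); each k_i <= n so we range over {ffun 'I_m -> 'I_n.+1}. *)
Definition mharm (n m : nat) : rat :=
  if m is 0 then 1 else
  \sum_(k : {ffun 'I_m -> 'I_n.+1} |
          [forall i, (0 < (k i : nat))%N] &&
          (1 <= \sum_(i < m) (k i : nat) <= n)%N)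
     (\prod_(i < m) ((k i : nat)%:R : rat))^-1.

(* Main.v *)
Require Import Defs.
From mathcomp Require Import all_boot all_order all_algebra.
From mathcomp Require Import zify ring lra.
Import Order.TTheory GRing.Theory Num.Theory.
Local Open Scope ring_scope.

Definition conv (f g : nat -> rat) (n : nat) : rat := \sum_(k < n.+1) f k * g (n - k)%N.
Definition PP (N : nat) (f : nat -> rat) : {poly rat} := \poly_(i < N) f i.

Lemma coefPM N f g k : (k < N)%N -> (PP N f * PP N g)`_k = conv f g k.
Proof.
move=> kN; rewrite coefM; apply: eq_bigr => j _; rewrite !coef_poly.
have j1 := ltn_ord j.
have h1 : (j < N)%N by lia.
have h2 : (k - j < N)%N by lia.
by rewrite h1 h2.
Qed.

Lemma convC f g n : conv f g n = conv g f n.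
Proof. by rewrite -(@coefPM _ f g _ (ltnSn n)) mulrC coefPM. Qed.

Lemma convA f g h n : conv (conv f g) h n = conv f (conv g h) n.
Proof.
have E1 : conv (conv f g) h n = (PP n.+1 f * PP n.+1 g * PP n.+1 h)`_n.
  rewrite coefM; apply: eq_bigr => j _.
  have j1 := ltn_ord j.
  rewrite coefPM; last by lia.
  rewrite coef_poly; case: ifP => //; lia.
have E2 : conv f (conv g h) n = (PP n.+1 f * (PP n.+1 g * PP n.+1 h))`_n.
  rewrite coefM; apply: eq_bigr => j _.
  have j1 := ltn_ord j.
  rewrite coefPM; last by lia.
  rewrite coef_poly; case: ifP => //; lia.
by rewrite E1 E2 mulrA.
Qed.

Lemma conv_ext f f' g g' n : (forall k, (k <= n)%N -> f k = f' k) ->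
  (forall k, (k <= n)%N -> g k = g' k) -> conv f g n = conv f' g' n.
Proof.
move=> Hf Hg; apply: eq_bigr => j _; have j1 := ltn_ord j.
rewrite Hf ?Hg //; lia.
Qed.

Definition L (k : nat) : rat := (k%:R)^-1.
Fixpoint G (m : nat) : nat -> rat :=
  match m with 0 => fun _ => 1 | m'.+1 => conv L (G m') end.

Definition ffcons (T : finType) m (h : T) (t : {ffun 'I_m -> T}) : {ffun 'I_m.+1 -> T} :=
  [ffun i => if unlift ord0 i is Some j then t j else h].

Lemma ffcons0 (T : finType) m h t : @ffcons T m h t ord0 = h.
Proof. by rewrite ffunE unlift_none. Qed.
Lemma ffconsS (T : finType) m h t j : @ffcons T m h t (lift ord0 j) = t j.
Proof. by rewrite ffunE liftK. Qed.

Lemma ffsum m B r : (r <= B)%N ->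
  \sum_(k : {ffun 'I_m -> 'I_B.+1} | [forall i, (0 < (k i : nat))%N] &&
          (\sum_(i < m) (k i : nat) <= r)%N)
     (\prod_(i < m) ((k i : nat)%:R : rat))^-1 = G m r.
Proof.
elim: m r => [|m IH] r rB /=.
  rewrite (eq_bigl (fun _ => true)); last first.
    by move=> k; rewrite big_ord0 andbT; apply/forallP => -[].
  rewrite (eq_bigr (fun _ => 1)); last by move=> k _; rewrite big_ord0 invr1.
  by rewrite sumr_const card_ffun !card_ord expn0.
rewrite (reindex (fun p : 'I_B.+1 * {ffun 'I_m -> 'I_B.+1} => @ffcons _ m p.1 p.2)); last first.
  exists (fun f : {ffun 'I_m.+1 -> 'I_B.+1} => (f ord0, [ffun j : 'I_m => f (lift ord0 j)])) => [[h t] _|f _] /=.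
    rewrite (@ffcons0 _ m); congr pair; apply/ffunP => j; by rewrite ffunE (@ffconsS _ m).
  apply/ffunP => i; rewrite ffunE; case: unliftP => [j ->|->] //.
  by rewrite ffunE.
rewrite (eq_bigl (fun q : 'I_B.+1 * {ffun 'I_m -> 'I_B.+1} =>
   ((0 < (q.1 : nat)) && (q.1 <= r))%N && ([forall i, (0 < (q.2 i : nat))%N] &&
     (\sum_(i < m) (q.2 i : nat) <= r - q.1)%N))); last first.
  move=> [h t] /=; rewrite big_ord_recl ffcons0.
  rewrite (eq_bigr (fun i => (t i : nat))); last by move=> i _; rewrite ffconsS.
  have -> : [forall i, (0 < (@ffcons _ m h t i : nat))%N] =
            (0 < (h : nat))%N && [forall i, (0 < (t i : nat))%N].
    apply/forallP/andP => [H|[H1 /forallP H2] i].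
      split; first by have := H ord0; rewrite ffcons0.
      by apply/forallP => j; have := H (lift ord0 j); rewrite ffconsS.
    by case: (unliftP ord0 i) => [j ->|->]; rewrite ?ffconsS ?ffcons0.
  case: (0 < (h:nat))%N; case: [forall i, (0 < (t i : nat))%N] => //=;
  apply/idP/idP; lia.
rewrite (eq_bigr (fun q : 'I_B.+1 * {ffun 'I_m -> 'I_B.+1} =>
   ((q.1 : nat)%:R)^-1 * (\prod_(i < m) ((q.2 i : nat)%:R : rat))^-1)); last first.
  move=> [h t] _ /=; rewrite big_ord_recl ffcons0 invfM.
  by rewrite (eq_bigr (fun i => ((t i : nat)%:R : rat))) // => i _; rewrite ffconsS.
rewrite -(pair_big_dep (fun h : 'I_B.+1 => (0 < (h : nat))%N && (h <= r)%N)
  (fun (h : 'I_B.+1) (t : {ffun 'I_m -> 'I_B.+1}) => [forall i, (0 < (t i : nat))%N] &&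
     (\sum_(i < m) (t i : nat) <= r - h)%N)
  (fun (h : 'I_B.+1) (t : {ffun 'I_m -> 'I_B.+1}) =>
   ((h : nat)%:R)^-1 * (\prod_(i < m) ((t i : nat)%:R : rat))^-1)) /=.
rewrite (eq_bigr (fun h : 'I_B.+1 => ((h:nat)%:R)^-1 * G m (r - h))); last first.
  move=> h /andP [_ hr]; rewrite -mulr_sumr IH //; lia.
rewrite /conv (big_ord_widen _ (fun k => L k * G m (r - k)%N) (_ : r.+1 <= B.+1)%N) //.
rewrite big_mkcond [RHS]big_mkcond; apply: eq_bigr => i _.
rewrite /L; case: (nat_of_ord i) => [|k] /=; first by rewrite invr0 mul0r.
by [].
Qed.

Lemma mharmG n m : mharm n m = G m n.
Proof.
case: m => [//|m]; rewrite /mharm -(@ffsum _ n n (leqnn n)).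
apply: eq_bigl => k; case Hf: [forall i, _] => //=.
have := (forallP Hf) ord0; rewrite big_ord_recl; case: (\sum_(i < m) _)%N => [|x] /=; lia.
Qed.

Lemma G1 n : G 1 n = harm n.
Proof.
rewrite /= /conv /harm big_add1 /= big_mkord.
by rewrite big_ord_recl /L invr0 mul0r add0r; apply: eq_bigr => i _; rewrite mulr1.
Qed.

Lemma harmS n : harm n.+1 = harm n + (n.+1%:R)^-1.
Proof. by rewrite /harm big_nat_recr. Qed.

Definition Dd p k : rat := 'C(k + p, k)%:R * (harm (k + p) - harm p).
Definition Aa p k : rat := conv L (fun j => 'C(j + p, j)%:R) k.

Lemma Arec p k : Aa p.+1 k.+1 = Aa p k.+1 + Aa p.+1 k.
Proof.
rewrite /Aa /conv big_ord_recr [in X in _ = X + _]big_ord_recr /=.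
rewrite subnn !add0n !bin0 addrAC -big_split /=; congr (_ + _).
apply: eq_bigr => j _; rewrite -mulrDr -natrD; congr (_ * _%:R).
have jk := ltn_ord j.
have -> : (k.+1 - j = (k - j).+1)%N by lia.
rewrite addSn binS; congr (_ + _).
by have -> : ((k - j) + p.+1 = (k - j).+1 + p)%N by lia.
Qed.

Lemma Drec p k : Dd p.+1 k.+1 = Dd p k.+1 + Dd p.+1 k.
Proof.
rewrite /Dd.
have -> : (k.+1 + p.+1 = (k + p.+1).+1)%N by lia.
have -> : (k.+1 + p = k + p.+1)%N by lia.
rewrite binS natrD !harmS.
have R : (k.+1%:R * 'C(k + p.+1, k.+1)%:R = p.+1%:R * 'C(k + p.+1, k)%:R :> rat).
  rewrite -!natrM mul_bin_left; congr (_ * _)%N%:R; lia.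
have -> : ((k + p.+1).+1%:R : rat) = k.+1%:R + p.+1%:R by rewrite -natrD; congr _%:R; lia.
have h1 : (p.+1%:R : rat) != 0 by rewrite pnatr_eq0.
have h2 : (k.+1%:R + p.+1%:R : rat) != 0 by rewrite -natrD pnatr_eq0.
move: R h1 h2; move: ('C(k + p.+1, k.+1)%:R : rat) ('C(k + p.+1, k)%:R : rat) => u v R h1 h2.
have -> : v = k.+1%:R * u / p.+1%:R.
  by rewrite R mulrC mulrA mulVf ?mul1r.
move: h1 h2; move: (k.+1%:R : rat) (p.+1%:R : rat) (harm (k + p.+1)) (harm p) => a b H hp h1 h2.
by field; rewrite h1 h2.
Qed.

Lemma DA p k : Dd p k = Aa p k.
Proof.
elim: p k => [|p IHp] k.
  rewrite /Dd /Aa addn0 binn mul1r.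
  have -> : harm 0 = 0 by rewrite /harm big_geq.
  rewrite subr0 -G1 /=.
  by apply: conv_ext => // j _; rewrite addn0 binn.
elim: k => [|k IHk].
  by rewrite /Dd /Aa /conv big_ord_recl big_ord0 /L /= subrr mulr0 invr0 mul0r addr0.
by rewrite Drec Arec IHk IHp.
Qed.

Lemma LL x y : (0 < x)%N -> (0 < y)%N -> L x * L y = L (x + y) * (L x + L y).
Proof.
move=> hx hy; rewrite /L natrD.
have h1 : (x%:R : rat) != 0 by rewrite pnatr_eq0 -lt0n.
have h2 : (y%:R : rat) != 0 by rewrite pnatr_eq0 -lt0n.
have h3 : (x%:R + y%:R : rat) != 0 by rewrite -natrD pnatr_eq0 -lt0n addn_gt0 hx.
move: h1 h2 h3; move: (x%:R : rat) (y%:R : rat) => a b h1 h2 h3.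
by field; rewrite h1 h2 h3.
Qed.

Lemma harm_add1 j : harm j = \sum_(0 <= i < j) L i.+1.
Proof. by rewrite /harm big_add1. Qed.

Lemma TS j : conv L L j.+1 = 2%:R * L j.+1 * harm j.
Proof.
rewrite /conv -(big_mkord xpredT (fun i => L i * L (j.+1 - i)%N)).
rewrite big_nat_recl // big_nat_recr //= subnn [L 0]/L invr0 mul0r mulr0 add0r addr0.
rewrite (eq_big_nat _ _ (F2 := fun i => L j.+1 * (L i.+1 + L (j - i)%N))); last first.
  move=> i /andP [_ hi]; rewrite subSS LL; [|by []|lia].
  by congr (L _ * _); lia.
rewrite -mulr_sumr big_split /= -harm_add1.
rewrite big_nat_rev /= (eq_big_nat _ _ (F2 := fun i => L i.+1)); last first.
  by move=> i /andP [_ hi]; congr L; lia.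
rewrite -harm_add1; ring.
Qed.

Lemma harm2S n : harm2 n.+1 = harm2 n + ((n.+1%:R) ^+ 2)^-1.
Proof. by rewrite /harm2 big_nat_recr. Qed.

Lemma G2 n : G 2 n = harm n ^+ 2 - harm2 n.
Proof.
have -> : G 2 n = \sum_(k < n.+1) conv L L k.
  rewrite [G 2 n]/= -[conv L _ n]/(conv L (conv L (fun _ => 1)) n) -convA.
  by apply: eq_bigr => k _; rewrite mulr1.
elim: n => [|n IH].
  rewrite big_ord1 /conv big_ord1 /L invr0 mulr0.
  by rewrite /harm /harm2 !big_geq // expr0n subr0.
rewrite big_ord_recr /= IH TS harmS harm2S /L.
rewrite -exprVn; ring.
Qed.

Lemma part1 n p m :
     \sum_(0 <= k < n.+1) ('C(k + p, k)%:R * mharm (n - k) m * (harm (k + p) - harm p))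
     = \sum_(0 <= k < n.+1) ('C(k + p, k)%:R * mharm (n - k) m.+1).
Proof.
rewrite !big_mkord.
have -> : \sum_(k < n.+1) ('C(k + p, k)%:R * mharm (n - k) m * (harm (k + p) - harm p))
   = conv (Dd p) (G m) n.
  by apply: eq_bigr => k _; rewrite mharmG /Dd mulrAC.
have -> : \sum_(k < n.+1) ('C(k + p, k)%:R * mharm (n - k) m.+1)
   = conv (fun k => 'C(k + p, k)%:R) (G m.+1) n.
  by apply: eq_bigr => k _; rewrite mharmG.
rewrite (@conv_ext _ (conv (fun j => 'C(j + p, j)%:R) L) _ (G m)) //; last first.
  by move=> k _; rewrite DA /Aa convC.
by rewrite convA.
Qed.

Theorem theorem10 :
  (forall n p m : nat,
     \sum_(0 <= k < n.+1) ('C(k + p, k)%:R * mharm (n - k) m * (harm (k + p) - harm p))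
     = \sum_(0 <= k < n.+1) ('C(k + p, k)%:R * mharm (n - k) m.+1))
  /\
  (forall n p : nat,
     \sum_(0 <= k < n.+1) ('C(k + p, k)%:R * (harm (k + p) - harm p))
     = \sum_(0 <= k < n.+1) ('C(k + p, k)%:R * harm (n - k)))
  /\
  (forall n p : nat,
     \sum_(0 <= k < n.+1) ('C(k + p, k)%:R * harm (n - k) * (harm (k + p) - harm p))
     = \sum_(0 <= k < n.+1) ('C(k + p, k)%:R * (harm (n - k) ^+ 2 - harm2 (n - k)))).
Proof.
split; first exact: part1.
split=> n p.
  transitivity (\sum_(0 <= k < n.+1) ('C(k + p, k)%:R * mharm (n - k) 0 * (harm (k + p) - harm p))).
    by apply: eq_bigr => k _; rewrite mharmG mulr1.
  by rewrite part1; apply: eq_bigr => k _; rewrite mharmG G1.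
transitivity (\sum_(0 <= k < n.+1) ('C(k + p, k)%:R * mharm (n - k) 1 * (harm (k + p) - harm p))).
  by apply: eq_bigr => k _; rewrite mharmG G1.
by rewrite part1; apply: eq_bigr => k _; rewrite mharmG G2.
Qed.
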